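(* Let $M$ be a primary submonoid of a free commutative monoid (of arbitrary rank). Then $M$ has finite rank $d:=\mathrm{rank}(M)$, and $M$ is isomorphic to a submonoid of $(\mathbb{N}^d,+)$.
   Context: Convention: all monoids are commutative, cancellative, and reduced, written additively; $M^\bullet=M\setminus\{0\}$; $\mathrm{rank}(M)$ is the rank of the Grothendieck group $\mathrm{gp}(M)$ as a $\mathbb{Z}$-module. $M$ is primary if $M$ is nontrivial and for all $x,y\in M^\bullet$ there is $n\in\mathbb{N}$ with $ny\in x+M$. *)

(* Defs.v *)
From HB Require Import structures.
From mathcomp Require Import all_boot all_order all_algebra.
From Stdlib Require Import List.
Set Implicit Arguments. Unset Strict Implicit. Unset Printing Implicit Defensive.
Import Order.TTheory GRing.Theory Num.Theory.

(* The free commutative monoid on a set (type) I of generators is modelled as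
   the finitely supported functions I -> nat with pointwise addition.
   A submonoid of it is a predicate M on I -> nat. *)

Definition fin_supp (I : Type) (x : I -> nat) : Prop :=
  exists s : list I, forall i, ~ List.In i s -> x i = 0%N.

Definition zerof (I : Type) : I -> nat := fun _ => 0%N.
Definition addf (I : Type) (x y : I -> nat) : I -> nat := fun i => (x i + y i)%N.
Definition scalef (I : Type) (n : nat) (x : I -> nat) : I -> nat :=
  fun i => (n * x i)%N.

Definition submonoid_of_free (I : Type) (M : (I -> nat) -> Prop) : Prop :=
  (forall x, M x -> fin_supp x) /\
  M (@zerof I) /\
  (forall x y, M x -> M y -> M (addf x y)).

Definition nonzerof (I : Type) (x : I -> nat) : Prop := exists i, x i <> 0%N.

Definition primary (I : Type) (M : (I -> nat) -> Prop) : Prop :=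
  (exists x, M x /\ nonzerof x) /\
  (forall x y, M x -> nonzerof x -> M y -> nonzerof y ->
     exists n : nat, exists z, M z /\ forall i, scalef n y i = addf x z i).

(* Grothendieck group of M, realised inside Z^(I): differences a - b *)
Definition gp (I : Type) (M : (I -> nat) -> Prop) (g : I -> int) : Prop :=
  exists a b, M a /\ M b /\ forall i, g i = ((a i)%:Z - (b i)%:Z)%R.

Definition Z_lin_indep (I : Type) (k : nat) (g : 'I_k -> I -> int) : Prop :=
  forall c : 'I_k -> int,
    (forall i, (\sum_(j < k) c j * g j i)%R = 0%R) -> forall j, c j = 0%R.

Definition has_rank (I : Type) (M : (I -> nat) -> Prop) (d : nat) : Prop :=
  (exists g : 'I_d -> I -> int, (forall j, gp M (g j)) /\ Z_lin_indep g) /\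
  (forall (k : nat) (g : 'I_k -> I -> int),
     (forall j, gp M (g j)) -> Z_lin_indep g -> (k <= d)%N).

(* M is isomorphic to a submonoid of (N^d, +): there is a monoid
   homomorphism from M to N^d that is injective (the image is then a
   submonoid of N^d and phi an isomorphism onto it). *)
Definition embeds_in_Nd (I : Type) (M : (I -> nat) -> Prop) (d : nat) : Prop :=
  exists phi : (I -> nat) -> 'I_d -> nat,
    (forall j, phi (@zerof I) j = 0%N) /\
    (forall x y, M x -> M y -> forall j, phi (addf x y) j = (phi x j + phi y j)%N) /\
    (forall x y, M x -> M y -> (forall j, phi x j = phi y j) -> forall i, x i = y i).

(* Main.v *)
Require Import Defs.
From mathcomp Require Import all_boot all_order all_algebra.
From Stdlib Require Import List Classical.
Import GRing.Theory Num.Theory.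
Set Implicit Arguments. Unset Strict Implicit.
Local Open Scope ring_scope.

Lemma size_length (T : Type) (s : list T) : size s = length s.
Proof. by elim: s => //= a s ->. Qed.

Lemma in_nth_ord (T : Type) (s : list T) (i0 i : T) :
  List.In i s -> exists l : 'I_(size s), List.nth l s i0 = i.
Proof.
move=> /(@List.In_nth T s i i0) [n [/ltP hn e]].
rewrite -size_length in hn. by exists (Ordinal hn).
Qed.

Lemma clear_den (k : nat) (v : 'rV[rat]_k) :
  exists (c : 'I_k -> int) (D : int), D != 0 /\
    forall j, (c j)%:~R = v 0 j * D%:~R.
Proof.
exists (fun j => numq (v 0 j) * \prod_(l | l != j) denq (v 0 l)).
exists (\prod_l denq (v 0 l)); split.
  by apply/prodf_neq0 => l _; apply: denq_neq0.
move=> j; rewrite [in RHS](bigD1 j) //=. by rewrite !intrM numqE mulrA.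
Qed.

Definition Gm (I : Type) (s : list I) (i0 : I) (k : nat) (g : 'I_k -> I -> int)
  : 'M[rat]_(k, size s) := \matrix_(j, l) (g j (List.nth l s i0))%:~R.
Arguments Gm {I} s i0 {k} g.

Lemma indep_free (I : Type) (s : list I) (i0 : I) (k : nat) (g : 'I_k -> I -> int) :
  (forall j i, ~ List.In i s -> g j i = 0) -> Z_lin_indep g ->
  row_free (Gm s i0 g).
Proof.
move=> hs hind; apply: inj_row_free => v hv.
have [c [D [hD hc]]] := clear_den v.
have hz : forall i, \sum_(j < k) c j * g j i = 0.
  move=> i; case: (classic (List.In i s)) => hi; last first.
    by apply: big1 => j _; rewrite hs // mulr0.
  have [l hl] := in_nth_ord i0 hi.
  apply: (@intr_inj rat); rewrite rmorph_sum /= rmorph0.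
  have := congr1 (fun A : 'M[rat]_(1, size s) => A 0 l) hv; rewrite !mxE => e.
  apply: (@eq_trans _ _ ((D%:~R : rat) * \sum_j v 0 j * Gm s i0 g j l)); last by rewrite e mulr0.
  rewrite mulr_sumr; apply: eq_bigr => j _.
  by rewrite intrM hc !mxE hl -mulrA mulrCA.
have h0 := hind c hz.
apply/rowP => j; rewrite mxE.
have := hc j; rewrite h0 rmorph0 => /esym /eqP.
by rewrite mulf_eq0 intr_eq0 (negPf hD) orbF => /eqP.
Qed.

Lemma lift_max_w (d : nat) (j : 'I_d) : lift ord_max j = widen_ord (leqnSn d) j.
Proof. by apply: val_inj; rewrite /= /bump leqNgt ltn_ord. Qed.

Lemma sum_split (d : nat) (F : 'I_d.+1 -> int) :
  \sum_(j < d.+1) F j = \sum_(j < d) F (lift ord_max j) + F ord_max.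
Proof. by rewrite big_ord_recr /=; congr (_ + _); apply: eq_bigr => j _; rewrite lift_max_w. Qed.

Theorem mainTheorem14 (I : Type) (M : (I -> nat) -> Prop) :
  submonoid_of_free M -> primary M ->
  exists d : nat, has_rank M d /\ embeds_in_Nd M d.
Proof.
move=> [hsupp [hM0 hadd]] [[x0 [hx0 [ix hix]]] hprim].
have [s hs] := hsupp x0 hx0.
have hMs : forall y, M y -> forall i, ~ List.In i s -> y i = 0%N.
  move=> y hy i hi; case: (classic (nonzerof y)) => hny.
    have [n [z [hz e]]] := hprim y x0 hy hny hx0 (ex_intro _ ix hix).
    have := e i; rewrite /scalef /addf hs // muln0 => /esym /eqP.
    by rewrite addn_eq0 => /andP[/eqP].
  apply: NNPP => hne; apply: hny; by exists i.
have hgs : forall g, gp M g -> forall i, ~ List.In i s -> g i = 0.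
  by move=> g [a [b [ha [hb e]]]] i hi; rewrite e (hMs a) // (hMs b).
pose P k := exists g : 'I_k -> I -> int, (forall j, gp M (g j)) /\ Z_lin_indep g.
have hPn : forall k, P k -> (k <= size s)%N.
  move=> k [g [hg hind]].
  have := indep_free ix (fun j i hi => hgs _ (hg j) i hi) hind.
  by rewrite /row_free => /eqP <-; apply: rank_leq_col.
have hP0 : P 0%N.
  exists (fun _ _ => 0); split; first by case.
  by move=> c _ [].
have [d [hd hmax]] : exists d, P d /\ forall k, P k -> (k <= d)%N.
  apply: NNPP => hno.
  have hup : forall d, P d -> exists k, P k /\ (d < k)%N.
    move=> d hd; apply: NNPP => hne; apply: hno; exists d; split => // k hk.
    rewrite leqNgt; apply/negP => hlt; apply: hne; by exists k.
  have hm : forall m, exists k, P k /\ (m <= k)%N.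
    elim=> [|m [k [hk hmk]]]; first by exists 0%N.
    have [k' [hk' hkk']] := hup k hk; exists k'; split => //.
    exact: leq_ltn_trans hmk hkk'.
  have [k [hk hlt]] := hm (size s).+1.
  by have := hPn k hk; rewrite leqNgt hlt.
exists d; split.
  split; first exact: hd.
  by move=> k g hg hi; apply: hmax; exists g.
have [g [hg hind]] := hd.
have hfree := indep_free ix (fun j i hi => hgs _ (hg j) i hi) hind.
have hfull : row_full (Gm s ix g)^T by rewrite /row_full mxrank_tr.
pose f := fullrankfun hfull.
have hunit := fullrowsub_unit hfull.
exists (fun x j => x (List.nth (f j) s ix)); split; first by [].
split; first by [].
move=> x y hx hy hxy.
pose h : I -> int := fun i => (x i)%:Z - (y i)%:Z.
have hh : gp M h by exists x, y.
pose g' : 'I_d.+1 -> I -> int :=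
  fun j => if unlift ord_max j is Some j' then g j' else h.
have hnot : ~ Z_lin_indep g'.
  move=> hi'; have : P d.+1 by exists g'; split => // j; rewrite /g'; case: unlift.
  by move=> /hmax; rewrite ltnn.
have [c [hc [j0 hj0]]] : exists c : 'I_d.+1 -> int,
    (forall i, \sum_(j < d.+1) c j * g' j i = 0) /\ exists j, c j <> 0.
  apply: NNPP => hno; apply: hnot => c hc j; apply: NNPP => hcj; apply: hno.
  by exists c; split => //; exists j.
have hc' : forall i, \sum_(j < d) c (lift ord_max j) * g j i + c ord_max * h i = 0.
  move=> i; rewrite -[RHS](hc i) sum_split /g' unlift_none; congr (_ + _).
  by apply: eq_bigr => j _; rewrite liftK.
pose cv : 'rV[rat]_d := \row_j (c (lift ord_max j))%:~R.
have hcv : cv *m (rowsub f (Gm s ix g)^T)^T = 0.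
  apply/rowP => l; rewrite !mxE.
  have := hc' (List.nth (f l) s ix).
  rewrite /h hxy subrr mulr0 addr0 => e.
  have := congr1 (fun z : int => (z%:~R : rat)) e; rewrite rmorph_sum rmorph0 /= => e2; rewrite -[RHS]e2.
  by apply: eq_bigr => j _; rewrite !mxE intrM.
have hcv0 : cv = 0.
  apply/eqP; rewrite -(mulmx_free_eq0 _ (B := (rowsub f (Gm s ix g)^T)^T)).
    by rewrite hcv.
  by rewrite row_free_unit unitmx_tr.
have hcl : forall j, c (lift ord_max j) = 0.
  move=> j; have := congr1 (fun A : 'rV[rat]_d => A 0 j) hcv0; rewrite !mxE.
  by move/eqP; rewrite intr_eq0 => /eqP.
have hcm : c ord_max <> 0.
  by case: (unliftP ord_max j0) hj0 => [j ->|->] //; rewrite hcl.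
move=> i; have := hc' i; rewrite big1 ?add0r; last by move=> j _; rewrite hcl mul0r.
move/eqP; rewrite mulf_eq0 => /orP[/eqP //|].
by rewrite /h subr_eq0 => /eqP [].
Qed.
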